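(* Let $G=(V,w,m)$ be a locally finite measured weighted graph, let $x_0\neq y_0\in V$ with $d(x_0,y_0)<\infty$, and let $\varepsilon>0$ be such that $d(x_0,y_0)\,\kappa(x_0,y_0)\le\varepsilon$. Then there exists an optimal transport plan $\rho:B_1(x_0)\times B_1(y_0)\to[0,\infty)$ for the pair $(x_0,y_0)$ such that $$\sum_{\substack{x\in B_1(x_0),\ y\in B_1(y_0)\\ d(x,y)>d(x_0,y_0)}}\rho(x,y)\ \ge\ \frac{q_{\min}-\varepsilon}{2},$$ where $q_{\min}:=\inf_{x\sim y}q(x,y)$.
   Context: A measured weighted graph $G=(V,w,m)$ consists of a countable set $V$, a symmetric $w:V\times V\to[0,\infty)$ vanishing on the diagonal, and $m:V\to(0,\infty)$; $x\sim y$ iff $w(x,y)>0$; locally finite means each vertex has finitely many neighbours. $q(x,y):=w(x,y)/m(x)$, $\Delta f(x):=\sum_y q(x,y)(f(y)-f(x))$. $d$ is the combinatorial graph distance, $B_1(x)=\{z:d(x,z)\le1\}$, $S_1(x)=\{z:d(x,z)=1\}$. For $x\ne y$, $\nabla_{xy}f:=(f(x)-f(y))/d(x,y)$, $\|\nabla f\|_\infty:=\sup_{x\sim y}\nabla_{xy}f$, and the Ollivier curvature is $\kappa(x,y):=\inf\{\nabla_{xy}\Delta f: \nabla_{yx}f=1,\ \|\nabla f\|_\infty=1\}$. A transport plan for $(x_0,y_0)$ is any $\rho:B_1(x_0)\times B_1(y_0)\to[0,\infty)$ with $\sum_{y\in B_1(y_0)}\rho(x,y)=q(x_0,x)$ for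 all $x\in S_1(x_0)$ and $\sum_{x\in B_1(x_0)}\rho(x,y)=q(y_0,y)$ for all $y\in S_1(y_0)$ (no condition is imposed at $x_0$ or $y_0$, and $\rho$ need not be a probability measure). It is known that $\kappa(x_0,y_0)=\sup_\rho\sum_{x,y}\rho(x,y)\big[1-\frac{d(x,y)}{d(x_0,y_0)}\big]$ over all transport plans; a transport plan attaining this supremum is called optimal. *)

(* Defs.v *)
From HB Require Import structures.
From mathcomp Require Import all_boot all_order all_algebra.
From mathcomp Require Import all_classical all_reals.
From mathcomp Require Import constructive_ereal ereal.
Set Implicit Arguments. Unset Strict Implicit. Unset Printing Implicit Defensive.
Import Order.TTheory GRing.Theory Num.Theory.
Local Open Scope classical_set_scope.
Local Open Scope ring_scope.

Definition mw_graph {R : realType} {V : countType} (w : V -> V -> R) (m : V -> R) : Prop :=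
  (forall x y, 0 <= w x y) /\ (forall x y, w x y = w y x) /\
  (forall x, w x x = 0) /\ (forall x, 0 < m x).

Definition locally_finite {R : realType} {V : countType} (w : V -> V -> R) : Prop :=
  forall x, finite_set [set y | 0 < w x y].

Definition qq {R : realType} {V : countType} (w : V -> V -> R) (m : V -> R) (x y : V) : R :=
  w x y / m x.

Inductive walk {R : realType} {V : countType} (w : V -> V -> R) : nat -> V -> V -> Prop :=
| walk0 x : walk w 0 x x
| walkS n x z y : walk w n x z -> 0 < w z y -> walk w n.+1 x y.

Definition gdist {R : realType} {V : countType} (w : V -> V -> R) (x y : V) : \bar R :=
  ereal_inf [set (n%:R)%:E | n in [set n | walk w n x y]].

Definition ball1 {R : realType} {V : countType} (w : V -> V -> R) (x : V) : set V :=
  [set z | (gdist w x z <= 1%:E)%E].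

Definition sphere1 {R : realType} {V : countType} (w : V -> V -> R) (x : V) : set V :=
  [set z | gdist w x z = 1%:E].

Definition grad {R : realType} {V : countType} (w : V -> V -> R) (f : V -> R) (x y : V) : R :=
  (f x - f y) / fine (gdist w x y).

Definition gradnorm {R : realType} {V : countType} (w : V -> V -> R) (f : V -> R) : \bar R :=
  ereal_sup [set (grad w f xy.1 xy.2)%:E | xy in [set xy : V * V | 0 < w xy.1 xy.2]].

Definition laplacian {R : realType} {V : countType} (w : V -> V -> R) (m : V -> R)
  (f : V -> R) (x : V) : R :=
  \sum_(y \in [set y | 0 < w x y]) qq w m x y * (f y - f x).

Definition kappa {R : realType} {V : countType} (w : V -> V -> R) (m : V -> R) (x y : V) : \bar R :=
  ereal_inf [set (grad w (laplacian w m f) x y)%:E |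
             f in [set f : V -> R | grad w f y x = 1 /\ gradnorm w f = 1%:E]].

Definition transport_plan {R : realType} {V : countType} (w : V -> V -> R) (m : V -> R)
  (x0 y0 : V) (rho : V -> V -> R) : Prop :=
  (forall x y, ball1 w x0 x -> ball1 w y0 y -> 0 <= rho x y) /\
  (forall x, sphere1 w x0 x -> \sum_(y \in ball1 w y0) rho x y = qq w m x0 x) /\
  (forall y, sphere1 w y0 y -> \sum_(x \in ball1 w x0) rho x y = qq w m y0 y).

Definition plan_cost {R : realType} {V : countType} (w : V -> V -> R)
  (x0 y0 : V) (rho : V -> V -> R) : R :=
  \sum_(x \in ball1 w x0) \sum_(y \in ball1 w y0)
     rho x y * (1 - fine (gdist w x y) / fine (gdist w x0 y0)).

Definition optimal_plan {R : realType} {V : countType} (w : V -> V -> R) (m : V -> R)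
  (x0 y0 : V) (rho : V -> V -> R) : Prop :=
  transport_plan w m x0 y0 rho /\
  forall rho', transport_plan w m x0 y0 rho' -> plan_cost w x0 y0 rho' <= plan_cost w x0 y0 rho.

Definition qmin {R : realType} {V : countType} (w : V -> V -> R) (m : V -> R) : \bar R :=
  ereal_inf [set (qq w m xy.1 xy.2)%:E | xy in [set xy : V * V | 0 < w xy.1 xy.2]].

(* Main.v *)
Require Import Defs.
From HB Require Import structures.
From mathcomp Require Import all_boot all_order all_algebra.
From mathcomp Require Import all_classical all_reals.
From mathcomp Require Import constructive_ereal ereal.
From mathcomp Require finmap topology normedtype derive ring lra zify.
Import Order.TTheory GRing.Theory Num.Theory.
Local Open Scope classical_set_scope.
Local Open Scope ring_scope.

Module Aux.
Import finmap topology normedtype derive ring lra zify.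
Import ArrowAsProduct numFieldNormedType.Exports.
Local Open Scope classical_set_scope.
Local Open Scope ring_scope.
Set Implicit Arguments. Unset Strict Implicit. Unset Printing Implicit Defensive.

Section Walks.
Context {R : realType} {V : countType} (w : V -> V -> R).
Hypothesis wsym : forall x y, w x y = w y x.

Lemma walk_cons n x y z : walk w n x y -> 0 < w z x -> walk w n.+1 z y.
Proof.
elim=> [a|k a b c _ IH wbc] wza.
  by apply: (walkS (walk0 _ _)).
by apply: (walkS (IH wza)).
Qed.

Lemma walk_cat n k x z y : walk w n x z -> walk w k z y -> walk w (n + k) x y.
Proof.
move=> h1 h2; elim: h2 h1 => [a|j a b c _ IH wbc] h1; first by rewrite addn0.
by rewrite addnS; apply: (walkS (IH h1)).
Qed.

Lemma walk_rev n x y : walk w n x y -> walk w n y x.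
Proof.
elim=> [a|k a b c _ IH wbc]; first exact: walk0.
by apply: (walk_cons IH); rewrite wsym.
Qed.

Lemma walk0E x y : walk w 0 x y -> x = y.
Proof. by move=> h; inversion h. Qed.

Lemma walk1E x y : walk w 1 x y -> 0 < w x y.
Proof. by move=> h; inversion h; subst; move/walk0E: H0 => ->. Qed.

Lemma walk_edge x y : 0 < w x y -> walk w 1 x y.
Proof. by move=> h; apply: (walkS (walk0 _ _)). Qed.

Lemma walk_uncons n x y : walk w n.+1 x y -> exists z, 0 < w x z /\ walk w n z y.
Proof.
move=> /walk_rev h; inversion h; subst.
by exists z; split; [rewrite wsym | exact: walk_rev].
Qed.

Definition haswalk x y := exists n, walk w n x y.

Definition dn x y : nat :=
  match pselect (haswalk x y) with
  | left h => ex_minn (P := fun n => `[< walk w n x y >]) (let: ex_intro n hn := h in ex_intro _ n (asboolT hn))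
  | right _ => 0%N
  end.

Lemma dnP x y : haswalk x y ->
  walk w (dn x y) x y /\ forall n, walk w n x y -> (dn x y <= n)%N.
Proof.
rewrite /dn; case: pselect => // h _.
case: ex_minnP => k /asboolP hk hmin; split => // n hn.
by apply: hmin; apply/asboolP.
Qed.

Lemma gdistE x y : haswalk x y -> gdist w x y = ((dn x y)%:R)%:E.
Proof.
move=> h; have [h1 h2] := dnP h.
apply/le_anti/andP; split.
  by apply: ereal_inf_lbound; exists (dn x y).
apply: le_ereal_inf_tmp => z [n /= hn <-].
by rewrite lee_fin ler_nat; apply: h2.
Qed.

Lemma gdist_nowalk x y : ~ haswalk x y -> gdist w x y = +oo%E.
Proof.
move=> h; rewrite /gdist.
suff -> : [set ((n%:R : R))%:E | n in [set n | walk w n x y]] = set0 by rewrite ereal_inf0.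
rewrite predeqE => z; split => // -[n /= hn _]; by case: h; exists n.
Qed.

Lemma dn_le x y n : walk w n x y -> (dn x y <= n)%N.
Proof. by move=> h; apply: (dnP (ex_intro _ n h)).2. Qed.

Lemma dn_walk x y n : walk w n x y -> walk w (dn x y) x y.
Proof. by move=> h; apply: (dnP (ex_intro _ n h)).1. Qed.

Lemma dn_tri x y z n k : walk w n x z -> walk w k z y -> (dn x y <= dn x z + dn z y)%N.
Proof.
move=> h1 h2; apply: dn_le; apply: walk_cat (dn_walk h1) (dn_walk h2).
Qed.

Lemma dn_sym x y n : walk w n x y -> dn x y = dn y x.
Proof.
move=> h; apply/eqP; rewrite eqn_leq; apply/andP; split; apply: dn_le.
  exact/walk_rev/(dn_walk (walk_rev h)).
exact/walk_rev/(dn_walk h).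
Qed.

Lemma dn0E x y n : walk w n x y -> dn x y = 0%N -> x = y.
Proof. by move=> h e; have := dn_walk h; rewrite e => /walk0E. Qed.

Lemma dn_refl x : dn x x = 0%N.
Proof. by apply/eqP; rewrite -leqn0; apply: (dn_le (walk0 _ _)). Qed.

Hypothesis wdiag : forall x, w x x = 0.

Lemma dn_edge x y : 0 < w x y -> dn x y = 1%N.
Proof.
move=> h; have := dn_le (walk_edge h); case E: (dn x y) => [|[|k]] // _.
by have := dn0E (walk_edge h) E => exy; move: h; rewrite exy wdiag ltxx.
Qed.

Lemma ball1P x z : ball1 w x z <-> z = x \/ 0 < w x z.
Proof.
rewrite /ball1 /=; split.
  have [h|h] := pselect (haswalk x z); last by rewrite gdist_nowalk.
  rewrite gdistE // lee_fin lern1; case E: (dn x z) => [|[|k]] // _.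
    by left; apply/esym/(dn0E (dnP h).1 E).
  by right; apply: walk1E; rewrite -E; exact: (dnP h).1.
case=> [->|h].
  by rewrite gdistE ?dn_refl ?lee_fin //; exists 0%N; exact: walk0.
by rewrite gdistE ?dn_edge ?lee_fin //; exists 1%N; exact: walk_edge.
Qed.

Lemma sphere1P x z : sphere1 w x z <-> 0 < w x z.
Proof.
rewrite /sphere1 /=; split.
  have [h|h] := pselect (haswalk x z); last by rewrite gdist_nowalk.
  rewrite gdistE // => -[] /eqP; rewrite pnatr_eq1 => /eqP E.
  by apply: walk1E; rewrite -E; exact: (dnP h).1.
move=> h; by rewrite gdistE ?dn_edge //; exists 1%N; exact: walk_edge.
Qed.

End Walks.

Section Plan.
Context {R : realType} {V : countType} (w : V -> V -> R) (m : V -> R).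
Hypothesis mw : mw_graph w m.
Hypothesis lf : locally_finite w.

Let w0 : forall x y, 0 <= w x y. Proof. by case: mw. Qed.
Let wsym : forall x y, w x y = w y x. Proof. by case: mw => _ []. Qed.
Let wdiag : forall x, w x x = 0. Proof. by case: mw => _ [_ []]. Qed.
Let mpos : forall x, 0 < m x. Proof. by case: mw => _ [_ []]. Qed.

Lemma ball_fin z : finite_set (ball1 w z).
Proof.
apply: (@sub_finite_set _ _ ([set z] `|` [set y | 0 < w z y])).
  by move=> y /(ball1P wdiag) [->|h]; [left|right].
by rewrite finite_setU; split; [exact: finite_set1| exact: lf].
Qed.

Lemma mem_fball z x : x \in fset_set (ball1 w z) <-> x = z \/ 0 < w z x.
Proof. rewrite in_fset_set; last exact: ball_fin. by rewrite in_setE; exact: (ball1P wdiag). Qed.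

Lemma qq_ge0 x y : 0 <= qq w m x y.
Proof. by rewrite /qq divr_ge0 // ltW. Qed.

Lemma qq_diag x : qq w m x x = 0.
Proof. by rewrite /qq wdiag mul0r. Qed.

Lemma qq_noedge x y : ~ (0 < w x y) -> qq w m x y = 0.
Proof.
move=> h; rewrite /qq; have : w x y = 0.
  by apply/eqP; rewrite eq_le w0 andbT leNgt; apply/negP.
by move=> ->; rewrite mul0r.
Qed.


Local Notation sB z := (fset_set (ball1 w z)).

Lemma fsum_ball z (F : V -> R) :
  \sum_(x \in ball1 w z) F x = \sum_(x <- sB z) F x.
Proof. exact: fsbig_finite (ball_fin z). Qed.

Lemma in_setb (b : V -> bool) y : (y \in [set y | b y]) = b y.
Proof. by apply/idP/idP => [/set_mem|/mem_set]. Qed.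

Lemma tpE x0 y0 rho : transport_plan w m x0 y0 rho <->
  [/\ (forall x y, x \in sB x0 -> y \in sB y0 -> 0 <= rho x y),
      (forall x, 0 < w x0 x -> \sum_(y <- sB y0) rho x y = qq w m x0 x) &
      (forall y, 0 < w y0 y -> \sum_(x <- sB x0) rho x y = qq w m y0 y)].
Proof.
rewrite /transport_plan; split.
  move=> [h1 [h2 h3]]; split.
  - move=> x y /mem_fball hx /mem_fball hy; apply: h1; exact/(ball1P wdiag).
  - by move=> x /(sphere1P wdiag) /h2; rewrite fsum_ball.
  - by move=> y /(sphere1P wdiag) /h3; rewrite fsum_ball.
move=> [h1 h2 h3]; split; [|split].
- by move=> x y /(ball1P wdiag)/mem_fball hx /(ball1P wdiag)/mem_fball hy; apply: h1.
- by move=> x /(sphere1P wdiag) /h2; rewrite fsum_ball.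
- by move=> y /(sphere1P wdiag) /h3; rewrite fsum_ball.
Qed.

Lemma costE x0 y0 rho : plan_cost w x0 y0 rho =
  \sum_(x <- sB x0) \sum_(y <- sB y0)
     rho x y * (1 - fine (gdist w x y) / fine (gdist w x0 y0)).
Proof. by rewrite /plan_cost fsum_ball; apply: eq_bigr => x _; rewrite fsum_ball. Qed.

Lemma farE x0 y0 (rho : V -> V -> R) :
  \sum_(x \in ball1 w x0) \sum_(y \in [set y | ball1 w y0 y /\ (gdist w x0 y0 < gdist w x y)%E])
                 rho x y =
  \sum_(x <- sB x0) \sum_(y <- sB y0 | (gdist w x0 y0 < gdist w x y)%E) rho x y.
Proof.
rewrite fsum_ball; apply: eq_bigr => x _.
rewrite (_ : [set y | _ /\ _] = ball1 w y0 `&` [set y | (gdist w x0 y0 < gdist w x y)%E]) //.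
rewrite fsbig_mkcondr fsum_ball [RHS]big_mkcond /=.
by apply: eq_bigr => y _; rewrite in_setb.
Qed.

End Plan.

Lemma cont_sum {R : realType} (T : topologicalType) (I : Type) (s : seq I) (g : I -> T -> R) :
  (forall j, continuous (g j)) -> continuous (fun t => \sum_(j <- s) g j t).
Proof.
elim: s => [|j s IH] h.
  have -> : (fun t => \sum_(j <- [::]) g j t) = cst 0 by apply: funext => t; rewrite big_nil.
  exact: cst_continuous.
have -> : (fun t => \sum_(k <- j :: s) g k t) = (g j) + (fun t => \sum_(k <- s) g k t).
  by apply: funext => t; rewrite big_cons.
by move=> t; apply: continuousD; [exact: h | exact: IH].
Qed.

Lemma cont_coord {R : realType} (I : eqType) (i : I) (a : R) :
  continuous (fun t : I -> R => t i * a).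
Proof.
move=> t; change ({for t, continuous ((fun t : I -> R => t i) \* (cst a))}).
apply: continuousM.
  exact: (@proj_continuous _ (fun _ => R) i).
exact: cst_continuous.
Qed.

Lemma sum_ind {R : realType} {V : eqType} (s : seq V) (a : V) (c : R) :
  uniq s -> a \in s -> \sum_(y <- s) (if y == a then c else 0) = c.
Proof.
move=> us ain; rewrite (bigD1_seq a) //= eqxx big1 ?addr0 //.
by move=> y /negbTE ->.
Qed.

Lemma le_sum_term {R : realType} {V : eqType} (s : seq V) (F : V -> R) a :
  uniq s -> a \in s -> (forall y, y \in s -> 0 <= F y) -> F a <= \sum_(y <- s) F y.
Proof.
move=> us ain h; rewrite (bigD1_seq a) //= lerDl.
by rewrite big_seq_cond; apply: sumr_ge0 => y /andP[ys _]; exact: h.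
Qed.

Section Exist.
Context {R : realType} {V : countType} (w : V -> V -> R) (m : V -> R) (x0 y0 : V).
Hypothesis mw : mw_graph w m.
Hypothesis lf : locally_finite w.
Hypothesis hD : fine (gdist w x0 y0) != 0.

Let w0 : forall x y, 0 <= w x y. Proof. by case: mw. Qed.
Let wsym : forall x y, w x y = w y x. Proof. by case: mw => _ []. Qed.
Let wdiag : forall x, w x x = 0. Proof. by case: mw => _ [_ []]. Qed.

Local Notation sB z := (fset_set (ball1 w z)).
Let cc x y := 1 - fine (gdist w x y) / fine (gdist w x0 y0).
Let bnd (i : V * V) : R :=
  if (i.1 \in sB x0) && (i.2 \in sB y0) then qq w m x0 i.1 + qq w m y0 i.2 else 0.
Let Box := [set t : V * V -> R | forall i, `[0, bnd i]%classic (t i)].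
Let Crow := \bigcap_(x in [set x | 0 < w x0 x])
   [set t : V * V -> R | \sum_(y <- sB y0) t (x, y) = qq w m x0 x].
Let Ccol := \bigcap_(y in [set y | 0 < w y0 y])
   [set t : V * V -> R | \sum_(x <- sB x0) t (x, y) = qq w m y0 y].
Let K := Box `&` (Crow `&` Ccol).
Let F (t : V * V -> R) := \sum_(x <- sB x0) \sum_(y <- sB y0) t (x, y) * cc x y.

Let pc (i : V * V) : continuous (fun t : V * V -> R => t i).
Proof. exact: (@proj_continuous _ (fun _ => R) i). Qed.

Let closed_sum (s : seq V) (g : V -> V * V) (a : R) :
  closed [set t : V * V -> R | \sum_(y <- s) t (g y) = a].
Proof.
rewrite (_ : [set t | _] = (fun t : V * V -> R => \sum_(y <- s) t (g y)) @^-1` [set z | z = a]) //.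
apply: preimage_closed; last exact: closed_eq.
by move=> t _; apply: (cont_sum (g := fun y t => t (g y))) => y; exact: pc.
Qed.

Let K_compact : compact K.
Proof.
apply: compact_closedI.
  by apply: (@tychonoff _ (fun _ => R) (fun i => `[0, bnd i]%classic)) => i; exact: segment_compact.
apply: closedI; apply: closed_bigI => z _.
  exact: (@closed_sum (sB y0) (fun y => (z, y)) (qq w m x0 z)).
exact: (@closed_sum (sB x0) (fun x => (x, z)) (qq w m y0 z)).
Qed.

Let F_cont : continuous F.
Proof.
have h : forall x, continuous (fun t : V * V -> R => \sum_(y <- sB y0) t (x, y) * cc x y).
  move=> x; apply: (cont_sum (g := fun y (t : V * V -> R) => t (x, y) * cc x y)) => y.
  exact (@cont_coord R _ (x, y) (cc x y)).
exact: (cont_sum h).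
Qed.

Let inBox t i : `[0, bnd i]%classic (t i) <-> 0 <= t i <= bnd i.
Proof. by rewrite /= in_itv. Qed.

Let memB z x : x \in sB z <-> x = z \/ 0 < w z x.
Proof. exact: (mem_fball mw lf). Qed.

Let edge_in z x : 0 < w z x -> x \in sB z.
Proof. by move=> h; apply/memB; right. Qed.

Let edge_neq z x : 0 < w z x -> x != z.
Proof. by move=> h; apply/eqP => e; move: h; rewrite e wdiag ltxx. Qed.

Let center_in z : z \in sB z.
Proof. by apply/memB; left. Qed.

Let in_neq_edge z x : x \in sB z -> x != z -> 0 < w z x.
Proof. by move=> /memB [->|//]; rewrite eqxx. Qed.

Let bnd_ge0 i : 0 <= bnd i.
Proof. by rewrite /bnd; case: ifP => // _; rewrite addr_ge0 // qq_ge0. Qed.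

Let inBoxE t : Box t <-> forall i, 0 <= t i <= bnd i.
Proof. by split => h i; have := h i; rewrite /= in_itv. Qed.

Let t0 (i : V * V) : R :=
  if (i.1 \in sB x0) && (i.2 \in sB y0) then
    (if i.2 == y0 then qq w m x0 i.1 else 0) + (if i.1 == x0 then qq w m y0 i.2 else 0)
  else 0.

Let K0 : K t0.
Proof.
split; [|split].
- apply/inBoxE => i; rewrite /t0 /bnd; case: ifP => _; last by rewrite lexx.
  apply/andP; split; first by rewrite addr_ge0 //; case: ifP => _; rewrite ?qq_ge0.
  by apply: lerD; case: ifP => _; rewrite ?qq_ge0.
- move=> x hx /=; rewrite big_seq.
  rewrite (eq_bigr (fun y => if y == y0 then qq w m x0 x else 0)); last first.
    by move=> y ys; rewrite /t0 /= edge_in // ys /= (negbTE (edge_neq hx)) addr0.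
  by rewrite -big_seq sum_ind // fset_uniq.
- move=> y hy /=; rewrite big_seq.
  rewrite (eq_bigr (fun x => if x == x0 then qq w m y0 y else 0)); last first.
    by move=> x xs; rewrite /t0 /= xs (edge_in hy) /= (negbTE (edge_neq hy)) add0r.
  by rewrite -big_seq sum_ind // fset_uniq.
Qed.

Lemma exists_opt : exists rho, optimal_plan w m x0 y0 rho.
Proof.
have [c /set_mem cK cmax] := compact_EVT_max (ex_intro _ t0 K0) K_compact
   (@continuous_subspaceT _ _ K F F_cont).
have [cB [cR cC]] := cK; move/inBoxE: cB => cB.
have tp : transport_plan w m x0 y0 (fun x y => c (x, y)).
  apply/(tpE mw lf); split.
  - by move=> x y _ _; have /andP[] := cB (x, y).
  - by move=> x hx; exact: cR.
  - by move=> y hy; exact: cC.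
exists (fun x y => c (x, y)); split => // rho' /(tpE mw lf) [h1 h2 h3].
pose t' (i : V * V) := if [&& i.1 \in sB x0, i.2 \in sB y0 & ~~ ((i.1 == x0) && (i.2 == y0))]
  then rho' i.1 i.2 else 0.
have Ft' : F t' = plan_cost w x0 y0 rho'.
  rewrite (costE mw lf); apply: eq_big_seq => x xs; apply: eq_big_seq => y ys.
  rewrite /t' /= xs ys /=; case: ifP => // /negbFE /andP[/eqP -> /eqP ->].
  by rewrite mul0r divff // subrr mulr0.
have Fc : F c = plan_cost w x0 y0 (fun x y => c (x, y)) by rewrite (costE mw lf).
rewrite -Ft' -Fc; apply: cmax; apply/mem_set; split; [|split].
- apply/inBoxE => -[x y]; rewrite /t' /=.
  case: ifP => [/and3P[xs ys nc]|_]; last by rewrite lexx bnd_ge0.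
  rewrite /bnd /= xs ys /= h1 //=.
  have [ex|nex] := eqVneq x x0.
    move: nc; rewrite ex eqxx /= => nyy.
    rewrite -(h3 y (in_neq_edge ys nyy)); apply: ler_wpDl; first exact: qq_ge0.
    apply: (le_sum_term (F := fun x => rho' x y)) => //; first exact: fset_uniq.
    by move=> z zs; exact: h1.
  rewrite -(h2 x (in_neq_edge xs nex)); apply: ler_wpDr; first exact: qq_ge0.
  apply: (le_sum_term (F := fun y => rho' x y)) => //; first exact: fset_uniq.
  by move=> z zs; exact: h1.
- move=> x hx /=; rewrite -(h2 x hx) big_seq [RHS]big_seq; apply: eq_bigr => y ys.
  by rewrite /t' /= edge_in // ys /= (negbTE (edge_neq hx)).
- move=> y hy /=; rewrite -(h3 y hy) big_seq [RHS]big_seq; apply: eq_bigr => x xs.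
  by rewrite /t' /= xs (edge_in hy) /= (negbTE (edge_neq hy)) andbF.
Qed.

End Exist.

Section Main.
Context {R : realType} {V : countType} (w : V -> V -> R) (m : V -> R).
Hypothesis mw : mw_graph w m.
Hypothesis lf : locally_finite w.
Variables (x0 y0 x1 : V) (k : nat).
Hypothesis hw0 : walk w k.+1 x0 y0.
Hypothesis hdn : dn w x0 y0 = k.+1.
Hypothesis hx1 : 0 < w x0 x1.
Hypothesis hw1 : walk w k x1 y0.

Let w0 : forall x y, 0 <= w x y. Proof. by case: mw. Qed.
Let wsym : forall x y, w x y = w y x. Proof. by case: mw => _ []. Qed.
Let wdiag : forall x, w x x = 0. Proof. by case: mw => _ [_ []]. Qed.

Local Notation sB z := (fset_set (ball1 w z)).

Let memB z x : x \in sB z <-> x = z \/ 0 < w z x.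
Proof. exact: (mem_fball mw lf). Qed.

Let gD : gdist w x0 y0 = (k.+1%:R)%:E.
Proof. by rewrite (gdistE (ex_intro _ _ hw0)) hdn. Qed.

Let fD : fine (gdist w x0 y0) = k.+1%:R.
Proof. by rewrite gD. Qed.

Let walk_to z x : x \in sB z -> exists2 n, walk w n z x & (n <= 1)%N.
Proof.
move=> /memB [->|h]; first by exists 0%N => //; exact: walk0.
by exists 1%N => //; exact: walk_edge.
Qed.

Let walk_xy x y : x \in sB x0 -> y \in sB y0 -> exists2 n, walk w n x y & (n <= k.+3)%N.
Proof.
move=> /walk_to [a ha a1] /walk_to [b hb b1].
exists (a + k.+1 + b)%N; last by rewrite -addn2 -addn1; lia.
apply: walk_cat hb; apply: walk_cat hw0; exact: (walk_rev wsym).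
Qed.

Lemma gdist_xy x y : x \in sB x0 -> y \in sB y0 ->
  gdist w x y = ((dn w x y)%:R)%:E /\ (dn w x y <= k.+3)%N.
Proof.
move=> xs ys; have [n hn nle] := walk_xy xs ys; split.
  exact: gdistE (ex_intro _ _ hn).
exact: leq_trans (dn_le hn) nle.
Qed.

Lemma fine_xy x y : x \in sB x0 -> y \in sB y0 -> fine (gdist w x y) = (dn w x y)%:R.
Proof. by move=> xs ys; rewrite (gdist_xy xs ys).1. Qed.

Lemma x1_in : x1 \in sB x0.
Proof. by apply/memB; right. Qed.

Lemma x1_neq : x1 != x0.
Proof. by apply/eqP => e; move: hx1; rewrite e wdiag ltxx. Qed.

Lemma dn_x1y0 : (dn w x1 y0 <= k)%N.
Proof. exact: dn_le hw1. Qed.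

Lemma dn_x1y y : y \in sB y0 -> (dn w x1 y <= k.+1)%N.
Proof.
move=> /walk_to [b hb b1]; apply: leq_trans (dn_le (walk_cat hw1 hb)) _; lia.
Qed.

Lemma dn_x0y y : y \in sB y0 -> (dn w x0 y <= k.+2)%N.
Proof.
move=> /walk_to [b hb b1]; apply: leq_trans (dn_le (walk_cat hw0 hb)) _; lia.
Qed.

Lemma lip (f : V -> R) : (forall a b, 0 < w a b -> f a - f b <= 1) ->
  forall n x y, walk w n x y -> f y - f x <= n%:R.
Proof.
move=> h n x y; elim => [a|j a b c _ IH wbc]; first by rewrite subrr.
have := h c b; rewrite wsym => /(_ wbc) hcb.
by rewrite -addn1 natrD; lra.
Qed.

Lemma edge_grad (f : V -> R) : gradnorm w f = 1%:E -> forall a b, 0 < w a b -> f a - f b <= 1.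
Proof.
move=> h a b hab.
have : ((grad w f a b)%:E <= gradnorm w f)%E by apply: ereal_sup_ubound; exists (a, b).
rewrite h lee_fin /grad (gdistE (ex_intro _ _ (walk_edge hab))) (dn_edge wdiag hab) /=.
by rewrite divr1.
Qed.

Lemma lapE (f : V -> R) z : laplacian w m f z = \sum_(y <- sB z) qq w m z y * (f y - f z).
Proof.
rewrite /laplacian (fsbig_widen _ (ball1 w z)); first by rewrite (fsum_ball mw lf).
  by move=> y h; apply/(ball1P wdiag); right.
by move=> y [/(ball1P wdiag) [->|h] nh] //=; rewrite subrr mulr0.
Qed.

Lemma duality (r : V -> V -> R) (f : V -> R) : transport_plan w m x0 y0 r ->
  grad w f y0 x0 = 1 -> gradnorm w f = 1%:E ->
  plan_cost w x0 y0 r <= grad w (laplacian w m f) x0 y0.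
Proof.
move=> /(tpE mw lf) [h1 h2 h3] hg hn.
have K0 : k.+1%:R != 0 :> R by rewrite pnatr_eq0.
have fy0 : f y0 - f x0 = k.+1%:R.
  move: hg; rewrite /grad (gdistE (ex_intro _ _ (walk_rev wsym hw0))) -(dn_sym wsym hw0) hdn /=.
  by move=> e; rewrite -[LHS](@divfK _ k.+1%:R) // e mul1r.
have lipf := lip (edge_grad hn).
rewrite /grad fD ler_pdivlMr ?ltr0n //.
have -> : plan_cost w x0 y0 r * k.+1%:R =
    \sum_(x <- sB x0) \sum_(y <- sB y0) r x y * (k.+1%:R - (dn w x y)%:R).
  rewrite (costE mw lf) big_distrl; apply: eq_big_seq => x xs.
  rewrite big_distrl; apply: eq_big_seq => y ys.
  by rewrite fD (fine_xy xs ys) /= -mulrA mulrBl mul1r divfK.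
have -> : laplacian w m f x0 - laplacian w m f y0 =
    \sum_(x <- sB x0) \sum_(y <- sB y0) r x y * ((f x - f x0) - (f y - f y0)).
  have -> : laplacian w m f x0 = \sum_(x <- sB x0) \sum_(y <- sB y0) r x y * (f x - f x0).
    rewrite lapE; apply: eq_big_seq => x xs.
    have [->|nx] := eqVneq x x0.
      by rewrite subrr mulr0 big1 // => y _; rewrite mulr0.
    have ex : 0 < w x0 x by move/memB: xs => [/eqP e|//]; move: nx; rewrite e.
    by rewrite -(h2 x ex) big_distrl.
  have -> : laplacian w m f y0 = \sum_(x <- sB x0) \sum_(y <- sB y0) r x y * (f y - f y0).
    rewrite lapE exchange_big; apply: eq_big_seq => y ys.
    have [->|ny] := eqVneq y y0.
      by rewrite subrr mulr0 big1 // => x _; rewrite mulr0.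
    have ey : 0 < w y0 y by move/memB: ys => [/eqP e|//]; move: ny; rewrite e.
    by rewrite -(h3 y ey) big_distrl.
  rewrite -sumrB; apply: eq_bigr => x _; rewrite -sumrB; apply: eq_bigr => y _.
  by rewrite [RHS]mulrBr.
rewrite big_seq_cond [X in _ <= X]big_seq_cond; apply: ler_sum => x /andP[xs _].
rewrite big_seq_cond [X in _ <= X]big_seq_cond; apply: ler_sum => y /andP[ys _].
apply: ler_wpM2l; first exact: h1.
have [n hwn _] := walk_xy xs ys.
have := lipf _ _ _ (dn_walk hwn); lra.
Qed.

Lemma kappa_ge (r : V -> V -> R) : transport_plan w m x0 y0 r ->
  ((plan_cost w x0 y0 r)%:E <= kappa w m x0 y0)%E.
Proof.
move=> tp; apply: le_ereal_inf_tmp => z [f [hf1 hf2] <-].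
by rewrite lee_fin; exact: duality.
Qed.

Lemma sum_indG (s : seq V) (a : V) (G : V -> R) :
  uniq s -> a \in s -> \sum_(y <- s) (if y == a then G y else 0) = G a.
Proof.
move=> us ain; rewrite (bigD1_seq a) //= eqxx big1 ?addr0 //.
by move=> y /negbTE ->.
Qed.

Lemma x0_in : x0 \in sB x0. Proof. by apply/memB; left. Qed.
Lemma y0_in : y0 \in sB y0. Proof. by apply/memB; left. Qed.

Lemma costK (r : V -> V -> R) : plan_cost w x0 y0 r * k.+1%:R =
    \sum_(x <- sB x0) \sum_(y <- sB y0) r x y * (k.+1%:R - (dn w x y)%:R).
Proof.
rewrite (costE mw lf) big_distrl; apply: eq_big_seq => x xs.
rewrite big_distrl; apply: eq_big_seq => y ys.
by rewrite fD (fine_xy xs ys) /= -mulrA mulrBl mul1r divfK // pnatr_eq0.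
Qed.

Definition Pb (y : V) := (y \in sB y0) && (dn w x1 y == k.+1)%N.

Lemma modify (rho : V -> V -> R) : optimal_plan w m x0 y0 rho ->
  exists r, optimal_plan w m x0 y0 r /\ (forall y, Pb y -> r x1 y = 0).
Proof.
move=> [tp opt]; have [h1 h2 h3] := (tpE mw lf x0 y0 rho).1 tp.
pose a y := if Pb y then rho x1 y else 0.
pose M := \sum_(y <- sB y0) a y.
pose r x y := rho x y + (if x == x1 then (if y == y0 then M else 0) - a y else 0)
   + (if x == x0 then a y else 0).
have Py0 : Pb y0 = false.
  rewrite /Pb (_ : (dn w x1 y0 == k.+1) = false) ?andbF //.
  by apply/negbTE; have := dn_x1y0; lia.
have a_ge0 y : 0 <= a y by rewrite /a; case: ifP => // /andP[ys _]; exact: h1 x1_in ys.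
have a_le y : y \in sB y0 -> a y <= rho x1 y.
  by move=> ys; rewrite /a; case: ifP => _; rewrite ?lexx ?(h1 _ _ x1_in ys).
have M_ge0 : 0 <= M by rewrite /M big_seq; apply: sumr_ge0 => y _.
have nx10 := x1_neq.
have tpr : transport_plan w m x0 y0 r.
  apply/(tpE mw lf); split.
  - move=> x y xs ys; rewrite /r.
    have [ex1|nx1] := eqVneq x x1.
      rewrite ex1 (negbTE nx10) addr0.
      have := a_le y ys; have := M_ge0; case: (y == y0) => ? ?; lra.
    rewrite addr0; have := h1 _ _ xs ys; have := a_ge0 y; case: (x == x0) => ? ?; lra.
  - move=> x hx; rewrite /r big_split big_split /=.
    have nx0 : x != x0 by apply/eqP => e; move: hx; rewrite e wdiag ltxx.
    rewrite [X in _ + X]big1 ?addr0; last by move=> y _; rewrite (negbTE nx0).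
    have [ex1|nx1] := eqVneq x x1; last by rewrite [X in _ + X]big1 ?addr0 ?h2 // => y _; rewrite (negbTE nx1).
    rewrite h2 // sumrB sum_ind ?fset_uniq ?y0_in // subrr addr0.
    by rewrite ex1.
  - move=> y hy; rewrite /r big_split big_split /=.
    have ny0 : y != y0 by apply/eqP => e; move: hy; rewrite e wdiag ltxx.
    rewrite (negbTE ny0) sub0r h3 //.
    rewrite sum_ind ?fset_uniq ?x1_in // sum_ind ?fset_uniq ?x0_in //.
    by rewrite subrK.
exists r; split; last first.
  move=> y Py; rewrite /r eqxx (negbTE nx10) addr0 /a Py.
  have -> : (y == y0) = false by apply/eqP => e; move: Py; rewrite e Py0.
  by rewrite sub0r addrN.
split => // rho' /opt le1; apply: le_trans le1 _.
pose C x y := 1 - fine (gdist w x y) / fine (gdist w x0 y0).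
pose A y := (if y == y0 then M else 0) - a y.
rewrite !(costE mw lf) -subr_ge0 -sumrB.
rewrite (eq_bigr (fun x => \sum_(y <- sB y0) (r x y - rho x y) * C x y)); last first.
  by move=> x _; rewrite -sumrB; apply: eq_bigr => y _; rewrite mulrBl.
have E1 : \sum_(x <- sB x0) \sum_(y <- sB y0) (r x y - rho x y) * C x y =
  \sum_(x <- sB x0) ((if x == x1 then \sum_(y <- sB y0) A y * C x y else 0) +
                     (if x == x0 then \sum_(y <- sB y0) a y * C x y else 0)).
  apply: eq_bigr => x _.
  have [ex1|nx1] := eqVneq x x1.
    rewrite ex1 (negbTE nx10) addr0; apply: eq_bigr => y _.
    by congr (_ * _); rewrite /r eqxx (negbTE nx10) /A; ring.
  have [ex0|nx0] := eqVneq x x0.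
    rewrite ex0 add0r; apply: eq_bigr => y _.
    by congr (_ * _); rewrite /r eqxx; move: nx1; rewrite ex0 eq_sym => /negbTE ->; ring.
  rewrite addr0 big1 // => y _.
  by rewrite /r (negbTE nx1) (negbTE nx0) !addr0 subrr mul0r.
rewrite E1 big_split /= sum_indG ?fset_uniq ?x1_in // sum_indG ?fset_uniq ?x0_in //.
have E2 : \sum_(y <- sB y0) A y * C x1 y = \sum_(y <- sB y0) a y * C x1 y0 - \sum_(y <- sB y0) a y * C x1 y.
  rewrite -big_distrl /= -/M.
  transitivity (\sum_(y <- sB y0) ((if y == y0 then M * C x1 y else 0) - a y * C x1 y)).
    by apply: eq_bigr => y _; rewrite /A mulrBl; case: (y == y0); rewrite ?mul0r.
  by rewrite sumrB sum_indG ?fset_uniq ?y0_in.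
rewrite E2 -sumrB -big_split /= big_seq; apply: sumr_ge0 => y ys.
rewrite -mulrBr -mulrDr /a; case: ifP => [Py|_]; last by rewrite mul0r.
apply: mulr_ge0; first exact: h1 x1_in ys.
rewrite /C.
have [_ /eqP dn1] := andP Py.
rewrite (fine_xy x1_in y0_in) (fine_xy x1_in ys) (fine_xy x0_in ys) fD dn1.
set u := (k.+1%:R : R)^-1.
have hu : 0 <= u by rewrite invr_ge0 ler0n.
have hK : k.+1%:R * u = 1 by rewrite mulfV // pnatr_eq0.
have ha : (dn w x1 y0)%:R * u <= k%:R * u by apply: ler_wpM2r => //; rewrite ler_nat dn_x1y0.
have hc : (dn w x0 y)%:R * u <= (k%:R + 2) * u.
  by apply: ler_wpM2r => //; rewrite -natrD ler_nat addn2; exact: dn_x0y.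
move: hK; rewrite -natr1 => hK.
lra.
Qed.

Lemma farP x y : x \in sB x0 -> y \in sB y0 ->
  (gdist w x0 y0 < gdist w x y)%E = (k.+1 < dn w x y)%N.
Proof. by move=> xs ys; rewrite gD (gdist_xy xs ys).1 lte_fin ltr_nat. Qed.

Lemma final (r : V -> V -> R) : transport_plan w m x0 y0 r -> (forall y, Pb y -> r x1 y = 0) ->
  qq w m x0 x1 <= plan_cost w x0 y0 r * k.+1%:R +
    2 * \sum_(x <- sB x0) \sum_(y <- sB y0 | (gdist w x0 y0 < gdist w x y)%E) r x y.
Proof.
move=> tp hP; have [h1 h2 h3] := (tpE mw lf x0 y0 r).1 tp.
pose T x y := r x y * (k.+1%:R - (dn w x y)%:R) +
   2 * (if (gdist w x0 y0 < gdist w x y)%E then r x y else 0).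
have -> : plan_cost w x0 y0 r * k.+1%:R +
    2 * \sum_(x <- sB x0) \sum_(y <- sB y0 | (gdist w x0 y0 < gdist w x y)%E) r x y =
    \sum_(x <- sB x0) \sum_(y <- sB y0) T x y.
  rewrite costK mulr_sumr -big_split; apply: eq_bigr => x _.
  rewrite /= mulr_sumr [X in _ + X]big_mkcond -big_split /=; apply: eq_bigr => y _.
  by rewrite /T; case: ifP; rewrite ?mulr0.
have T_ge0 x y : x \in sB x0 -> y \in sB y0 -> 0 <= T x y.
  move=> xs ys; rewrite /T farP //; have hr := h1 _ _ xs ys.
  have hd := (gdist_xy xs ys).2.
  case: ltnP => hf.
    have : (dn w x y)%:R <= k.+1%:R + 2 :> R by rewrite -natrD ler_nat addn2.
    nra.
  have : (dn w x y)%:R <= k.+1%:R :> R by rewrite ler_nat.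
  nra.
apply: le_trans (_ : _ <= \sum_(y <- sB y0) T x1 y) _.
  rewrite -(h2 x1 hx1) big_seq_cond [X in _ <= X]big_seq_cond.
  apply: ler_sum => y /andP[ys _].
  have hr := h1 _ _ x1_in ys.
  case Py: (Pb y).
    by rewrite /T hP // mul0r; case: ifP => _; rewrite ?mulr0 addr0.
  have hd : (dn w x1 y <= k)%N.
    have := dn_x1y ys; move: Py; rewrite /Pb ys /=; lia.
  rewrite /T farP ?x1_in // ltnNge (leq_trans hd) // mulr0 addr0.
  have : (dn w x1 y)%:R <= k%:R :> R by rewrite ler_nat.
  rewrite -natr1; nra.
apply: (le_sum_term (F := fun x => \sum_(y <- sB y0) T x y)); first exact: fset_uniq.
  exact: x1_in.
move=> x xs; rewrite big_seq; apply: sumr_ge0 => y ys; exact: T_ge0.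
Qed.

Lemma main_core (eps : R) : (gdist w x0 y0 * kappa w m x0 y0 <= eps%:E)%E ->
  exists rho : V -> V -> R,
    optimal_plan w m x0 y0 rho /\
    (qmin w m - eps%:E <=
       2%:E * (\sum_(x \in ball1 w x0) \sum_(y \in [set y | ball1 w y0 y /\ (gdist w x0 y0 < gdist w x y)%E])
                 rho x y)%:E)%E.
Proof.
move=> heps.
have hD : fine (gdist w x0 y0) != 0 by rewrite fD pnatr_eq0.
have [rho0 opt0] := exists_opt mw lf hD.
have [r [optr hPr]] := modify opt0.
exists r; split => //.
rewrite (farE mw lf).
have hf := final optr.1 hPr.
have hk := kappa_ge optr.1.
have hq : (qmin w m <= (qq w m x0 x1)%:E)%E by apply: ereal_inf_lbound; exists (x0, x1).
have hc : plan_cost w x0 y0 r * k.+1%:R <= eps.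
  rewrite -lee_fin; apply: le_trans heps; rewrite gD mulrC EFinM.
  by apply: lee_wpmul2l => //; rewrite lee_fin ler0n.
apply: le_trans (leeB hq (lexx eps%:E)) _.
by rewrite -EFinB -EFinM lee_fin; lra.
Qed.

End Main.

End Aux.

Theorem lemma2p2 (R : realType) (V : countType) (w : V -> V -> R) (m : V -> R)
  (x0 y0 : V) (eps : R) :
  mw_graph w m -> locally_finite w ->
  x0 <> y0 -> (gdist w x0 y0 < +oo)%E ->
  0 < eps -> (gdist w x0 y0 * kappa w m x0 y0 <= eps%:E)%E ->
  exists rho : V -> V -> R,
    optimal_plan w m x0 y0 rho /\
    (qmin w m - eps%:E <=
       2%:E * (\sum_(x \in ball1 w x0) \sum_(y \in [set y | ball1 w y0 y /\ (gdist w x0 y0 < gdist w x y)%E])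
                 rho x y)%:E)%E.
Proof.
move=> mw lf nxy hfin _ heps.
have wsym : forall x y, w x y = w y x by case: mw => _ [].
have hw : Aux.haswalk w x0 y0.
  apply: contrapT => h; move: hfin; by rewrite Aux.gdist_nowalk // ltxx.
have [hw' _] := Aux.dnP hw.
move E : (Aux.dn w x0 y0) hw' => n hwn.
case: n E hwn => [E hwn|k E hwn].
  by case: nxy; exact: (Aux.dn0E hwn E).
have [x1 [hx1 hw1]] := Aux.walk_uncons wsym hwn.
exact: (Aux.main_core mw lf hwn E hx1 hw1 heps).
Qed.
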